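(* Let $\gamma_{ab}(q)$ be a metric and $E_0\neq0$ a fixed constant, and consider the geodesic equations $\ddot q^a+\Gamma^a_{bc}\dot q^b\dot q^c=0$ subject to $\gamma_{ab}\dot q^a\dot q^b=2E_0$. Then each of the following is a first integral of this constrained system: Integral 1. For $\ell\ge0$, $$I_{(\ell)1}=\Big(-\sum_{k=1}^{\ell}\frac{t^{2k}}{2k}L_{(2k-1)(a;b)}+C_{(0)ab}\Big)\dot q^a\dot q^b+\sum_{k=1}^{\ell}t^{2k-1}L_{(2k-1)a}\dot q^a+G(q),$$ where (if $\ell\ge1$) $L_{(2\ell-1)(a;b)}$ is a Killing tensor, $C_{(0)ab}$ is a second order CKT with associated vector $X_{(0)a}$, for $k=1,\dots,\ell-1$ each $L_{(2k-1)(a;b)}$ is a second order CKT with associated vector $Y_{(2k-1)a}=\frac{k(2k+1)}{E_0}L_{(2k+1)a}$, and $G_{,a}=-2E_0X_{(0)a}-L_{(1)a}$, the term $L_{(1)a}$ being present only if $\ell>0$. Integral 2. For $\ell\ge0$, $$I_{(\ell)2}=\sum_{k=0}^{\ell}\Big(-\frac{t^{2k+1}}{2k+1}L_{(2k)(a;b)}\dot q^a\dot q^b+t^{2k}L_{(2k)a}\dot q^a\Big),$$ where $L_{(2\ell)(a;b)}$ is a Killing tensor and, for $k=0,\dots,\ell-1$, $L_{(2k)(a;b)}$ is a second order CKT with associated vector $Y_{(2k)a}=\frac{(k+1)(2k+1)}{E_0}L_{(2k+2)a}$. Integral 3. For a constant $\lambda\ne0$, $$I_{(e)}=e^{\lambda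 t}\big(-L_{(a;b)}\dot q^a\dot q^b+\lambda L_a\dot q^a\big),$$ where $L_{(a;b)}$ is a second order CKT with associated vector $Y_a=\frac{\lambda^2}{2E_0}L_a$.
   Context: $\Gamma^a_{bc}$ are the Levi-Civita connection coefficients of $\gamma_{ab}$; comma = partial derivative, semicolon = covariant derivative, dot = $d/dt$; round brackets denote symmetrization with weight $1/N!$. A first integral of the constrained system is a function $I(t,q,\dot q)$ with $dI/dt=0$ along every geodesic with $\gamma_{ab}\dot q^a\dot q^b=2E_0$. A symmetric tensor $U_{ab}$ is a second order conformal Killing tensor (CKT) with associated vector $u_a$ if $U_{(ab;c)}=u_{(a}\gamma_{bc)}$; it is a Killing tensor if $u_a=0$. *)

(* Defs.v *)
From HB Require Import structures.
From mathcomp Require Import all_boot all_order all_algebra.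
From mathcomp Require Import all_classical all_reals all_analysis.
Set Implicit Arguments. Unset Strict Implicit. Unset Printing Implicit Defensive.
Import Order.TTheory GRing.Theory Num.Theory.
Import numFieldNormedType.Exports.
Local Open Scope classical_set_scope.
Local Open Scope ring_scope.

Section Defs.
Variables (R : realType) (n : nat).

Definition vec := 'rV[R]_n.
Definition sfield := vec -> R.
Definition covfield := 'I_n -> vec -> R.
Definition tfield := 'I_n -> 'I_n -> vec -> R.

Definition ecoord (i : 'I_n) : vec := delta_mx 0 i.

Definition partial (f : sfield) (i : 'I_n) : sfield := fun q => derive f q (ecoord i).

Fixpoint CkOn (D : set vec) (k : nat) (f : sfield) : Prop :=
  match k with
  | 0 => forall q, D q -> {for q, continuous f}
  | k.+1 => (forall q, D q -> differentiable f q) /\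
            forall i, CkOn D k (partial f i)
  end.

Definition smoothOn (D : set vec) (f : sfield) := forall k, CkOn D k f.

Definition gmx (g : tfield) (q : vec) : 'M[R]_n := \matrix_(i, j) g i j q.
Definition ginv (g : tfield) (q : vec) : 'M[R]_n := invmx (gmx g q).

Definition metricOn (D : set vec) (g : tfield) : Prop :=
  open D /\
  (forall i j q, D q -> g i j q = g j i q) /\
  (forall q, D q -> \det (gmx g q) != 0) /\
  (forall i j, smoothOn D (g i j)).

Definition Gamma (g : tfield) (a b c : 'I_n) (q : vec) : R :=
  2^-1 * \sum_(d < n) ginv g q a d *
     (partial (g d c) b q + partial (g d b) c q - partial (g b c) d q).

Definition covD1 (g : tfield) (L : covfield) (a b : 'I_n) (q : vec) : R :=
  partial (L a) b q - \sum_(c < n) Gamma g c a b q * L c q.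

Definition symD (g : tfield) (L : covfield) : tfield :=
  fun a b q => 2^-1 * (covD1 g L a b q + covD1 g L b a q).

Definition covD2 (g : tfield) (U : tfield) (a b c : 'I_n) (q : vec) : R :=
  partial (U a b) c q - \sum_(d < n) Gamma g d c a q * U d b q
                      - \sum_(d < n) Gamma g d c b q * U a d q.

Definition sym3 (T : 'I_n -> 'I_n -> 'I_n -> vec -> R) (a b c : 'I_n) (q : vec) : R :=
  6^-1 * (T a b c q + T a c b q + T b a c q + T b c a q + T c a b q + T c b a q).

Definition CKT (D : set vec) (g : tfield) (U : tfield) (u : covfield) : Prop :=
  (forall a b q, D q -> U a b q = U b a q) /\
  (forall a b c q, D q ->
     sym3 (covD2 g U) a b c q = sym3 (fun a b c q => u a q * g b c q) a b c q).

Definition KT (D : set vec) (g : tfield) (U : tfield) : Prop :=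
  CKT D g U (fun _ _ => 0).

Definition velocity (x : R -> vec) : R -> vec := derive1 x.

Definition constrained_geodesic (D : set vec) (g : tfield) (E0 : R)
    (x : R -> vec) (t0 t1 : R) : Prop :=
  forall t, t0 < t < t1 ->
    [/\ D (x t), derivable x t 1, derivable (velocity x) t 1,
        (forall a : 'I_n, derive1 (velocity x) t 0 a +
           \sum_(b < n) \sum_(c < n)
              Gamma g a b c (x t) * velocity x t 0 b * velocity x t 0 c = 0) &
        \sum_(a < n) \sum_(b < n) g a b (x t) * velocity x t 0 a * velocity x t 0 b
          = 2 * E0].

Definition first_integral (D : set vec) (g : tfield) (E0 : R)
    (I : R -> vec -> vec -> R) : Prop :=
  forall (x : R -> vec) (t0 t1 : R), constrained_geodesic D g E0 x t0 t1 ->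
    forall t, t0 < t < t1 ->
      derivable (fun s => I s (x s) (velocity x s)) t 1 /\
      derive1 (fun s => I s (x s) (velocity x s)) t = 0.

Definition quadv (U : tfield) (q v : vec) : R :=
  \sum_(a < n) \sum_(b < n) U a b q * v 0 a * v 0 b.
Definition linv (L : covfield) (q v : vec) : R :=
  \sum_(a < n) L a q * v 0 a.

(* The three integrals.  L k is the covector field L_{(k)a}. *)
Definition I1 (g : tfield) (l : nat) (L : nat -> covfield) (C0 : tfield) (G : sfield)
    (t : R) (q v : vec) : R :=
  \sum_(a < n) \sum_(b < n)
     (- (\sum_(1 <= k < l.+1) t ^+ (2 * k) / (2 * k)%:R * symD g (L (2 * k).-1) a b q)
      + C0 a b q) * v 0 a * v 0 b
  + \sum_(1 <= k < l.+1) t ^+ (2 * k).-1 * linv (L (2 * k).-1) q v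
  + G q.

Definition I2 (g : tfield) (l : nat) (L : nat -> covfield) (t : R) (q v : vec) : R :=
  \sum_(0 <= k < l.+1)
     (- (t ^+ (2 * k).+1 / (2 * k).+1%:R) * quadv (symD g (L (2 * k))) q v
      + t ^+ (2 * k) * linv (L (2 * k)) q v).

Definition Iexp (g : tfield) (lam : R) (L : covfield) (t : R) (q v : vec) : R :=
  expR (lam * t) * (- quadv (symD g L) q v + lam * linv L q v).

End Defs.

(* Main.v *)
Require Import Defs.
From HB Require Import structures.
From mathcomp Require Import all_boot all_order all_algebra.
From mathcomp Require Import all_classical all_reals all_analysis.
From mathcomp Require Import ring.
Import Order.TTheory GRing.Theory Num.Theory.
Import numFieldNormedType.Exports.
Local Open Scope classical_set_scope.
Local Open Scope ring_scope.
Set Implicit Arguments. Unset Strict Implicit.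
Section Alg.
Variables (R : comRingType) (n : nat).
Local Notation I := 'I_n.

Lemma sum2E (F : I -> I -> R) :
  \sum_a \sum_b F a b = \sum_(p : I * I) F p.1 p.2.
Proof. by rewrite pair_big. Qed.

Lemma sum3E (F : I -> I -> I -> R) :
  \sum_a \sum_b \sum_c F a b c = \sum_(p : I * (I * I)) F p.1 p.2.1 p.2.2.
Proof.
rewrite -(pair_big predT predT (fun a p => F a p.1 p.2)) /=.
by apply: eq_bigr => a _; rewrite pair_big.
Qed.

Lemma sum4E (F : I -> I -> I -> I -> R) :
  \sum_a \sum_b \sum_c \sum_d F a b c d =
  \sum_(p : I * (I * (I * I))) F p.1 p.2.1 p.2.2.1 p.2.2.2.
Proof.
rewrite -(pair_big predT predT (fun a p => F a p.1 p.2.1 p.2.2)) /=.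
by apply: eq_bigr => a _; rewrite sum3E.
Qed.

Variable v : I -> R.
Definition cub (T : I -> I -> I -> R) :=
  \sum_a \sum_b \sum_c T a b c * v a * v b * v c.

Lemma cub_swap12 T : cub (fun a b c => T b a c) = cub T.
Proof.
rewrite /cub !sum3E (reindex_inj (h := fun p : I * (I * I) => (p.2.1, (p.1, p.2.2)))) /=.
  by apply: eq_bigr => p _; ring.
by move=> [a [b c]] [a' [b' c']] /= [-> -> ->].
Qed.

Lemma cub_swap23 T : cub (fun a b c => T a c b) = cub T.
Proof.
rewrite /cub !sum3E (reindex_inj (h := fun p : I * (I * I) => (p.1, (p.2.2, p.2.1)))) /=.
  by apply: eq_bigr => p _; ring.
by move=> [a [b c]] [a' [b' c']] /= [-> -> ->].
Qed.

Lemma cub_reidx T T' (h : I * (I * I) -> I * (I * I)) : injective h ->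
  (forall p, T' (h p).1 (h p).2.1 (h p).2.2 * v (h p).1 * v (h p).2.1 * v (h p).2.2
           = T p.1 p.2.1 p.2.2 * v p.1 * v p.2.1 * v p.2.2) ->
  cub T' = cub T.
Proof.
move=> ih H; rewrite /cub !sum3E (reindex_inj ih) /=.
by apply: eq_bigr => p _; rewrite H.
Qed.

Lemma cubD T1 T2 : cub (fun a b c => T1 a b c + T2 a b c) = cub T1 + cub T2.
Proof. by rewrite /cub !sum3E -big_split /=; apply: eq_bigr => p _; ring. Qed.

Lemma cubN T : cub (fun a b c => - T a b c) = - cub T.
Proof. by rewrite /cub !sum3E -sumrN /=; apply: eq_bigr => p _; ring. Qed.

Lemma cubZ k T : cub (fun a b c => k * T a b c) = k * cub T.
Proof. by rewrite /cub !sum3E big_distrr /=; apply: eq_bigr => p _; ring. Qed.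

Lemma cubB T1 T2 : cub (fun a b c => T1 a b c - T2 a b c) = cub T1 - cub T2.
Proof. by rewrite cubD cubN. Qed.

Lemma cub_sym6 T :
  cub (fun a b c => T a b c + T a c b + T b a c + T b c a + T c a b + T c b a)
  = 6%:R * cub T.
Proof.
rewrite !cubD.
rewrite (@cub_reidx T (fun a b c => T a c b) (fun p => (p.1, (p.2.2, p.2.1)))); last 2 first.
- by move=> [a [b c]] [a' [b' c']] /= [-> -> ->].
- by move=> p /=; ring.
rewrite (@cub_reidx T (fun a b c => T b a c) (fun p => (p.2.1, (p.1, p.2.2)))); last 2 first.
- by move=> [a [b c]] [a' [b' c']] /= [-> -> ->].
- by move=> p /=; ring.
rewrite (@cub_reidx T (fun a b c => T b c a) (fun p => (p.2.2, (p.1, p.2.1)))); last 2 first.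
- by move=> [a [b c]] [a' [b' c']] /= [-> -> ->].
- by move=> p /=; ring.
rewrite (@cub_reidx T (fun a b c => T c a b) (fun p => (p.2.1, (p.2.2, p.1)))); last 2 first.
- by move=> [a [b c]] [a' [b' c']] /= [-> -> ->].
- by move=> p /=; ring.
rewrite (@cub_reidx T (fun a b c => T c b a) (fun p => (p.2.2, (p.2.1, p.1)))); last 2 first.
- by move=> [a [b c]] [a' [b' c']] /= [-> -> ->].
- by move=> p /=; ring.
rewrite -[cub T]/(cub (fun a b c => T a b c)).
ring.
Qed.

Lemma dquad_alg (U : I -> I -> R) (P G : I -> I -> I -> R) (w : I -> R) :
  (forall a, w a = - \sum_b \sum_c G a b c * v b * v c) ->
  \sum_a \sum_b (U a b * v a * w b + U a b * v b * w a
                 + v a * v b * \sum_c P a b c * v c)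
  = cub (fun a b c => P a b c - \sum_d G d c a * U d b - \sum_d G d c b * U a d).
Proof.
move=> geo_Hw.
rewrite !cubB.
under eq_bigr => a _ do rewrite !big_split /=.
rewrite !big_split /=.
have HC : \sum_a \sum_b v a * v b * \sum_c P a b c * v c = cub P.
  rewrite /cub; apply: eq_bigr => a _; apply: eq_bigr => b _.
  by rewrite big_distrr; apply: eq_bigr => c _ /=; ring.
have HB : \sum_a \sum_b U a b * v b * w a = - cub (fun a b c => \sum_d G d c a * U d b).
  under eq_bigr => a _ do under eq_bigr => b _ do
    rewrite geo_Hw mulrN big_distrr -sumrN.
  under eq_bigr => a _ do under eq_bigr => b _ do under eq_bigr => e _ do
    rewrite big_distrr -sumrN.
  rewrite /cub -sumrN.
  under [RHS]eq_bigr => a _ do rewrite -sumrN.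
  under [RHS]eq_bigr => a _ do under eq_bigr => b _ do rewrite -sumrN.
  under [RHS]eq_bigr => a _ do under eq_bigr => b _ do under eq_bigr => c _ do
    rewrite big_distrl big_distrl big_distrl -sumrN.
  rewrite !sum4E [RHS](reindex_inj (h := fun p : I * (I * (I * I)) => (p.2.2.2, (p.2.1, (p.2.2.1, p.1))))) /=.
    by apply: eq_bigr => p _ /=; ring.
  by move=> [a [b [c d]]] [a' [b' [c' d']]] /= [-> -> -> ->].
have HA : \sum_a \sum_b U a b * v a * w b = - cub (fun a b c => \sum_d G d c b * U a d).
  under eq_bigr => a _ do under eq_bigr => b _ do
    rewrite geo_Hw mulrN big_distrr -sumrN.
  under eq_bigr => a _ do under eq_bigr => b _ do under eq_bigr => e _ do
    rewrite big_distrr -sumrN.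
  rewrite /cub -sumrN.
  under [RHS]eq_bigr => a _ do rewrite -sumrN.
  under [RHS]eq_bigr => a _ do under eq_bigr => b _ do rewrite -sumrN.
  under [RHS]eq_bigr => a _ do under eq_bigr => b _ do under eq_bigr => c _ do
    rewrite big_distrl big_distrl big_distrl -sumrN.
  rewrite !sum4E [RHS](reindex_inj (h := fun p : I * (I * (I * I)) => (p.1, (p.2.2.2, (p.2.2.1, p.2.1))))) /=.
    by apply: eq_bigr => p _ /=; ring.
  by move=> [a [b [c d]]] [a' [b' [c' d']]] /= [-> -> -> ->].
rewrite HA HB HC; ring.
Qed.

Lemma dlin_alg (L : I -> R) (P : I -> I -> R) (G : I -> I -> I -> R) (w : I -> R) :
  (forall a, w a = - \sum_b \sum_c G a b c * v b * v c) ->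
  \sum_a (L a * w a + v a * \sum_b P a b * v b)
  = \sum_a \sum_b (P a b - \sum_c G c a b * L c) * v a * v b.
Proof.
move=> geo_Hw; rewrite big_split /= addrC.
under [RHS]eq_bigr => a _ do under eq_bigr => b _ do rewrite mulrBl mulrBl.
under [RHS]eq_bigr => a _ do rewrite sumrB.
rewrite sumrB; congr (_ + _).
  by apply: eq_bigr => a _; rewrite big_distrr; apply: eq_bigr => b _ /=; ring.
under eq_bigr => a _ do rewrite geo_Hw mulrN big_distrr -sumrN.
rewrite -sumrN.
under eq_bigr => a _ do under eq_bigr => b _ do rewrite big_distrr -sumrN.
under [RHS]eq_bigr => a _ do under eq_bigr => b _ do rewrite big_distrl big_distrl.
under [RHS]eq_bigr => a _ do rewrite -sumrN.
under [RHS]eq_bigr => a _ do under eq_bigr => b _ do rewrite -sumrN.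
rewrite !sum3E (reindex_inj (h := fun p : I * (I * I) => (p.2.2, (p.1, p.2.1)))) /=.
  by apply: eq_bigr => p _ /=; ring.
by move=> [a [b c]] [a' [b' c']] /= [-> -> ->].
Qed.
End Alg.

Section S.
Variables (R : realType) (n : nat).
Implicit Types (f h : 'rV[R]_n -> R) (q : 'rV[R]_n).

Lemma diff_bsum (I : Type) (r : seq I) (Pr : pred I) (F : I -> 'rV[R]_n -> R) q :
  (forall i, Pr i -> differentiable (F i) q) ->
  differentiable (fun y => \sum_(i <- r | Pr i) F i y) q.
Proof.
move=> H; rewrite -fct_sumE; elim/big_ind: _ => //.
all: first [by move=> f h df dh; apply: differentiableD
  | by move=> *; apply: H
  | exact: (differentiable_cst (0 : R) q) | idtac].
Qed.

Lemma diff_bprod (I : Type) (r : seq I) (Pr : pred I) (F : I -> 'rV[R]_n -> R) q :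
  (forall i, Pr i -> differentiable (F i) q) ->
  differentiable (fun y => \prod_(i <- r | Pr i) F i y) q.
Proof.
move=> H; rewrite -fct_prodE; elim/big_ind: _ => //.
all: first [by move=> f h df dh; apply: differentiableM
  | by move=> *; apply: H
  | exact: (differentiable_cst (1 : R) q) | idtac].
Qed.

Lemma diffMf (f h : 'rV[R]_n -> R) q : differentiable f q -> differentiable h q ->
  differentiable (fun y => f y * h y) q.
Proof. exact: differentiableM. Qed.

Lemma diffCf (c : R) q : differentiable (fun _ : 'rV[R]_n => c) q.
Proof. exact: differentiable_cst. Qed.

Definition ndiff f q := exists h, differentiable h q /\ \forall y \near q, f y = h y.

Lemma diff_ndiff f q : differentiable f q -> ndiff f q.
Proof. by move=> df; exists f; split => //; near=> y. Unshelve. all: by end_near. Qed.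

Lemma ndiffD f h q : ndiff f q -> ndiff h q -> ndiff (fun y => f y + h y) q.
Proof.
move=> [f1 [d1 e1]] [h1 [d2 e2]]; exists (f1 + h1); split.
  exact: differentiableD.
by near=> y; rewrite (near e1 y) // (near e2 y).
Unshelve. all: by end_near. Qed.

Lemma ndiffM f h q : ndiff f q -> ndiff h q -> ndiff (fun y => f y * h y) q.
Proof.
move=> [f1 [d1 e1]] [h1 [d2 e2]]; exists (f1 * h1); split.
  exact: differentiableM.
by near=> y; rewrite (near e1 y) // (near e2 y).
Unshelve. all: by end_near. Qed.

Lemma ndiff_cst (c : R) q : ndiff (fun _ => c) q.
Proof. apply: diff_ndiff; exact: differentiable_cst. Qed.

Lemma ndiffN f q : ndiff f q -> ndiff (fun y => - f y) q.
Proof.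
move=> d; have -> : (fun y => - f y) = (fun y => (fun=> -1) y * f y).
  by apply/funext => y; rewrite mulN1r.
exact: ndiffM (ndiff_cst _ _) d.
Qed.

Lemma ndiff_sum (I : finType) (F : I -> 'rV[R]_n -> R) q :
  (forall i, ndiff (F i) q) -> ndiff (fun y => \sum_(i : I) F i y) q.
Proof.
move=> H; rewrite /ndiff.
have [hh Hh] := choice H.
exists (fun y => \sum_(i : I) hh i y); split.
  by apply: diff_bsum => i _; exact: (Hh i).1.
have : \forall y \near q, forall i, F i y = hh i y.
  exact: (@filter_forall _ I (fun i y => F i y = hh i y) _ _ (fun i => (Hh i).2)).
by apply: filterS => y Hy; apply: eq_bigr => i _.
Qed.

Lemma diff_det m (M : 'rV[R]_n -> 'M[R]_m) q :
  (forall i j, differentiable (fun y => M y i j) q) ->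
  differentiable (fun y => \det (M y)) q.
Proof.
move=> H; rewrite /determinant; apply: diff_bsum => s _.
apply: diffMf; first exact: diffCf.
by apply: diff_bprod => i _; apply: H.
Qed.

Lemma ndiff_ginv (D : set 'rV[R]_n) (g : 'I_n -> 'I_n -> 'rV[R]_n -> R) q i j :
  (\forall y \near q, D y) -> D q -> (forall q, D q -> \det (gmx g q) != 0) ->
  (forall a b, differentiable (g a b) q) -> ndiff (fun y => ginv g y i j) q.
Proof.
move=> nD Dq dn0 dg.
exists (fun y => (\det (gmx g y))^-1 * \adj (gmx g y) i j); split.
  apply: diffMf.
    apply: differentiableV; last exact: dn0.
    by apply: diff_det => a b; under eq_fun do rewrite mxE.
  under eq_fun do rewrite mxE /cofactor.
  apply: diffMf; first exact: diffCf.
  by apply: diff_det => a b; under eq_fun do rewrite !mxE.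
apply: filterS nD => y Dy.
by rewrite /ginv /invmx unitmxE unitfE dn0 // mxE.
Qed.

Lemma smooth_diff (D : set 'rV[R]_n) f q : smoothOn D f -> D q -> differentiable f q.
Proof. by move=> H Dq; exact: (H 1%N).1. Qed.

Lemma smooth_partial (D : set 'rV[R]_n) f i : smoothOn D f -> smoothOn D (partial f i).
Proof. by move=> H k; exact: (H k.+1).2. Qed.

Lemma smooth_ndiff (D : set 'rV[R]_n) f q : smoothOn D f -> D q -> ndiff f q.
Proof. by move=> H Dq; apply: diff_ndiff; exact: smooth_diff H Dq. Qed.

Lemma ndiff_Gamma (D : set 'rV[R]_n) g q a b c : metricOn D g -> D q ->
  ndiff (Gamma g a b c) q.
Proof.
move=> [oD [_ [dn0 sg]]] Dq; rewrite /Gamma.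
have nD : \forall y \near q, D y by apply: open_nbhs_nbhs; split.
apply: ndiffM; first exact: ndiff_cst.
apply: ndiff_sum => d; apply: ndiffM.
  have := @ndiff_ginv D g q a d nD Dq dn0.
  by apply => a' b'; exact: smooth_diff (sg a' b') Dq.
apply: ndiffD; first apply: ndiffD.
- exact: smooth_ndiff (smooth_partial _ (sg _ _)) Dq.
- exact: smooth_ndiff (smooth_partial _ (sg _ _)) Dq.
- apply: ndiffN; exact: smooth_ndiff (smooth_partial _ (sg _ _)) Dq.
Qed.

Lemma ndiff_covD1 (D : set 'rV[R]_n) g L q a b : metricOn D g -> D q ->
  (forall a, smoothOn D (L a)) -> ndiff (covD1 g L a b) q.
Proof.
move=> mg Dq sL; rewrite /covD1; apply: ndiffD.
  exact: smooth_ndiff (smooth_partial _ (sL _)) Dq.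
apply: ndiffN; apply: ndiff_sum => c; apply: ndiffM.
  exact: ndiff_Gamma mg Dq.
exact: smooth_ndiff (sL _) Dq.
Qed.

Lemma ndiff_symD (D : set 'rV[R]_n) g L q a b : metricOn D g -> D q ->
  (forall a, smoothOn D (L a)) -> ndiff (symD g L a b) q.
Proof.
move=> mg Dq sL; rewrite /symD; apply: ndiffM; first exact: ndiff_cst.
by apply: ndiffD; apply: ndiff_covD1 mg Dq sL.
Qed.

Lemma geo_chain (x : R -> 'rV[R]_n) t f : derivable x t 1 -> ndiff f (x t) ->
  is_derive t 1 (fun s => f (x s))
    (\sum_a partial f a (x t) * velocity x t 0 a).
Proof.
move=> dx [h [dh eh]].
have dxd : differentiable x t by apply/derivable1_diffP.
have dhx : differentiable (h \o x) t by exact: differentiable_comp.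
have Hh : is_derive t 1 (h \o x) (\sum_a partial h a (x t) * velocity x t 0 a).
  apply: DeriveDef; first by apply/derivable1_diffP.
  rewrite deriveE // diff_comp //= -derive1E' // -/(velocity x t).
  rewrite {1}(row_sum_delta (velocity x t)) linear_sum; apply: eq_bigr => a _.
  by rewrite linearZ /= /partial deriveE // mulrC.
have cx : {for t, continuous x} by exact: differentiable_continuous.
have ex : \forall s \near t, h (x s) = f (x s).
  exact: (filterS (fun s (H : f (x s) = h (x s)) => esym H) (cx _ eh)).
have -> : \sum_a partial f a (x t) * velocity x t 0 a =
          \sum_a partial h a (x t) * velocity x t 0 a.
  apply: eq_bigr => a _; congr (_ * _); rewrite /partial.
  by apply: near_eq_derive; apply: filterS eh => y ->.
exact: near_eq_is_derive ex Hh.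
Qed.
End S.

Section Time.
Variables (R : realType) (t : R).
Implicit Types f h : R -> R.

Lemma isdM f h df dh : is_derive t 1 f df -> is_derive t 1 h dh ->
  is_derive t 1 (fun s => f s * h s) (f t * dh + h t * df).
Proof. by move=> H1 H2; exact: (is_deriveM H1 H2). Qed.

Lemma isdD f h df dh : is_derive t 1 f df -> is_derive t 1 h dh ->
  is_derive t 1 (fun s => f s + h s) (df + dh).
Proof. by move=> H1 H2; exact: (is_deriveD H1 H2). Qed.

Lemma isdN f df : is_derive t 1 f df -> is_derive t 1 (fun s => - f s) (- df).
Proof. by move=> H1; exact: (is_deriveN H1). Qed.

Lemma isdC (c : R) : is_derive t 1 (fun _ => c) 0.
Proof. exact: is_derive_cst. Qed.

Lemma isd_sum (I : eqType) (r : seq I) (F : I -> R -> R) (dF : I -> R) :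
  (forall i, i \in r -> is_derive t 1 (F i) (dF i)) ->
  is_derive t 1 (fun s => \sum_(i <- r) F i s) (\sum_(i <- r) dF i).
Proof.
elim: r => [|i r IH] H.
  rewrite big_nil; under eq_fun do rewrite big_nil; exact: isdC.
rewrite big_cons; under eq_fun do rewrite big_cons.
apply: isdD; first by apply: H; rewrite mem_head.
by apply: IH => j jr; apply: H; rewrite in_cons jr orbT.
Qed.

Lemma isd_pow m : is_derive t 1 (fun s => s ^+ m) (m%:R * t ^+ m.-1).
Proof.
apply: is_derive_eq; first exact: derivableP (@exprn_derivable R m t 1).
rewrite exp_derive.
first [by rewrite [_ *: 1]mulr1 | by rewrite -[_ *: 1]/(_ * 1) mulr1 | by rewrite scalerA mulr1 | idtac].
Qed.

Lemma isd_exp (lam : R) : is_derive t 1 (fun s => expR (lam * s)) (expR (lam * t) * lam).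
Proof.
have H : is_derive t 1 (fun s => lam * s) lam.
  have := isdM (isdC lam) (@is_derive_id _ _ t 1).
  by rewrite mulr1 mulr0 addr0.
exact: (is_derive1_comp (is_derive_expR (lam * t)) H).
Qed.
End Time.

Section Geo.
Variables (R : realType) (n : nat) (D : set 'rV[R]_n)
  (g : 'I_n -> 'I_n -> 'rV[R]_n -> R) (E0 : R) (x : R -> 'rV[R]_n) (t : R).
Hypothesis mg : metricOn D g.
Hypothesis Dq : D (x t).
Hypothesis dx : derivable x t 1.
Hypothesis dv : derivable (velocity x) t 1.
Hypothesis geo : forall a : 'I_n, derive1 (velocity x) t 0 a +
  \sum_(b < n) \sum_(c < n) Gamma g a b c (x t) * velocity x t 0 b * velocity x t 0 c = 0.
Hypothesis cons : \sum_(a < n) \sum_(b < n) g a b (x t) * velocity x t 0 a * velocity x t 0 b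
   = 2 * E0.

Local Notation v := (fun a => velocity x t 0 a).

Lemma geo_dvel a : is_derive t 1 (fun s => velocity x s 0 a) (derive1 (velocity x) t 0 a).
Proof.
apply: DeriveDef; first by move/derivable_mxP: dv => /(_ 0 a).
by rewrite derive1E derive_mx // mxE.
Qed.

Lemma geo_Hw a : derive1 (velocity x) t 0 a =
  - \sum_b \sum_c Gamma g a b c (x t) * v b * v c.
Proof. by apply/eqP; rewrite -addr_eq0; apply/eqP; exact: geo. Qed.

Lemma geo_dscal f : ndiff f (x t) ->
  is_derive t 1 (fun s => f (x s)) (\sum_a partial f a (x t) * v a).
Proof. exact: geo_chain. Qed.

Lemma geo_dlin L : (forall a, ndiff (L a) (x t)) ->
  is_derive t 1 (fun s => linv L (x s) (velocity x s))
    (\sum_a \sum_b covD1 g L a b (x t) * v a * v b).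
Proof.
move=> HL; rewrite /linv.
apply: is_derive_eq.
  apply: isd_sum => a _; apply: isdM; first exact: geo_chain.
  exact: geo_dvel.
rewrite /covD1 -(@dlin_alg _ _ v (fun a => L a (x t)) (fun a b => partial (L a) b (x t))
   (fun a b c => Gamma g a b c (x t)) (fun a => derive1 (velocity x) t 0 a)) //.
exact: geo_Hw.
Qed.

Lemma geo_dquad U : (forall a b, ndiff (U a b) (x t)) ->
  is_derive t 1 (fun s => quadv U (x s) (velocity x s))
    (cub v (fun a b c => covD2 g U a b c (x t))).
Proof.
move=> HU; rewrite /quadv.
apply: is_derive_eq.
  apply: isd_sum => a _; apply: isd_sum => b _.
  apply: isdM; last exact: geo_dvel.
  apply: isdM; first exact: geo_chain.
  exact: geo_dvel.
rewrite /covD2 -(@dquad_alg _ _ v (fun a b => U a b (x t)) (fun a b c => partial (U a b) c (x t))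
   (fun a b c => Gamma g a b c (x t)) (fun a => derive1 (velocity x) t 0 a)) //.
  apply: eq_bigr => a _ /=; apply: eq_bigr => b _ /=; ring.
exact: geo_Hw.
Qed.
End Geo.

Section Sym.
Variables (R : realType) (n : nat) (D : set 'rV[R]_n)
  (g : 'I_n -> 'I_n -> 'rV[R]_n -> R).

Lemma quad_symD L q (w : 'rV[R]_n) : quadv (symD g L) q w =
  \sum_a \sum_b covD1 g L a b q * w 0 a * w 0 b.
Proof.
rewrite /quadv /symD.
set T := covD1 g L.
have E : \sum_a \sum_b T b a q * w 0 a * w 0 b = \sum_a \sum_b T a b q * w 0 a * w 0 b.
  by rewrite exchange_big /=; apply: eq_bigr => a _; apply: eq_bigr => b _ /=; ring.
transitivity (2^-1 * (\sum_a \sum_b T a b q * w 0 a * w 0 b +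
                      \sum_a \sum_b T b a q * w 0 a * w 0 b)).
  by rewrite !sum2E -big_split big_distrr /=; apply: eq_bigr => p _ /=; ring.
by rewrite E; field.
Qed.

Lemma cub_sym3 (T : 'I_n -> 'I_n -> 'I_n -> 'rV[R]_n -> R) q (v : 'I_n -> R) :
  cub v (fun a b c => sym3 T a b c q) = cub v (fun a b c => T a b c q).
Proof.
rewrite /sym3 cubZ cub_sym6 mulrA mulVf ?mul1r //.
Qed.

Lemma cub_CKT U u q (w : 'rV[R]_n) : CKT D g U u -> D q ->
  cub (fun a => w 0 a) (fun a b c => covD2 g U a b c q) =
  (\sum_a u a q * w 0 a) * (\sum_b \sum_c g b c q * w 0 b * w 0 c).
Proof.
move=> [_ H] Dq.
rewrite -cub_sym3.
have -> : (fun a b c => sym3 (covD2 g U) a b c q) =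
          (fun a b c => sym3 (fun a b c q => u a q * g b c q) a b c q).
  by apply/funext => a; apply/funext => b; apply/funext => c; apply: H.
rewrite cub_sym3 /cub big_distrl; apply: eq_bigr => a _ /=.
rewrite big_distrr; apply: eq_bigr => b _ /=.
rewrite big_distrr; apply: eq_bigr => c _ /=; ring.
Qed.
End Sym.

Lemma fi_of_isd (R : realType) (f : R -> R) (t df : R) :
  is_derive t 1 f df -> df = 0 -> derivable f t 1 /\ derive1 f t = 0.
Proof. by move=> H e; split; [exact: ex_derive | rewrite derive1E derive_val]. Qed.


Lemma telescope (R : comRingType) (beta : nat -> R) (l : nat) :
  \sum_(0 <= k < l) ((if (k.+1 < l)%N then - beta k.+1 else 0) + beta k)
  = if (0 < l)%N then beta 0%N else 0.
Proof.
case: l => [|m]; first by rewrite big_geq.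
rewrite big_split /= big_nat_recr //= ltnn addr0 big_nat_recl //=.
rewrite addrCA -big_split /= big_nat_cond big1 ?addr0 //.
by move=> i /andP [/andP [_ lt] _]; rewrite ltnS lt addNr.
Qed.

Section Ints.
Variables (R : realType) (n : nat) (D : set 'rV[R]_n)
  (g : 'I_n -> 'I_n -> 'rV[R]_n -> R) (E0 : R).
Hypothesis mg : metricOn D g.
Hypothesis E0n : E0 != 0.

Lemma linvZ (c : R) (L : 'I_n -> 'rV[R]_n -> R) q w :
  linv (fun a q => c * L a q) q w = c * linv L q w.
Proof. by rewrite /linv big_distrr; apply: eq_bigr => a _ /=; ring. Qed.

Lemma sumZl (c : R) (f w : 'I_n -> R) :
  \sum_a c * f a * w a = c * \sum_a f a * w a.
Proof. by rewrite big_distrr; apply: eq_bigr => a _ /=; ring. Qed.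

Lemma int2 (l : nat) (L : nat -> 'I_n -> 'rV[R]_n -> R) :
     (forall k a, (k <= l)%N -> smoothOn D (L (2 * k)%N a)) ->
     KT D g (symD g (L (2 * l)%N)) ->
     (forall k, (k < l)%N ->
        CKT D g (symD g (L (2 * k)%N))
            (fun a q => (k.+1 * (2 * k).+1)%:R / E0 * L (2 * k).+2 a q)) ->
     first_integral D g E0 (I2 g l L).
Proof.
move=> sL KT2 ckt x t0 t1 Hg t Ht.
have [Dq dx dv geo cons] := Hg t Ht.
have nS k : (k <= l)%N -> forall a b, ndiff (symD g (L (2 * k)%N) a b) (x t).
  by move=> hk a b; exact: ndiff_symD mg Dq (fun a => sL k a hk).
have nL k : (k <= l)%N -> forall a, ndiff (L (2 * k)%N a) (x t).
  by move=> hk a; exact: smooth_ndiff (sL k a hk) Dq.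
apply: fi_of_isd; rewrite /I2.
  apply: isd_sum => k; rewrite mem_index_iota /= ltnS => hk.
  exact: (isdD (isdM (isdN (isdM (isd_pow t (2 * k).+1) (isdC t ((2 * k).+1%:R)^-1)))
                     (geo_dquad dx dv geo (nS k hk)))
               (isdM (isd_pow t (2 * k)) (geo_dlin dx dv geo (nL k hk)))).
set beta := fun k => (2 * k)%:R * t ^+ (2 * k).-1 * linv (L (2 * k)%N) (x t) (velocity x t).
rewrite (@eq_big_nat _ _ _ 0 l.+1 _ (fun k => (if (k.+1 < l.+1)%N then - beta k.+1 else 0) + beta k)).
  by rewrite telescope /beta /= muln0 mul0r mul0r.
move=> k /andP [_ hk]; rewrite ltnS in hk.
rewrite /= -quad_symD ltnS.
have e1 : t ^+ (2 * k).+1 = t * t ^+ (2 * k) by rewrite exprS.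
have c0 : ((2 * k).+1%:R : R) != 0 by rewrite pnatr_eq0.
case: ltnP => hkl.
  rewrite (@cub_CKT _ _ _ _ _ _ (x t) (velocity x t) (ckt k hkl) Dq) cons /=.
  rewrite sumZl -/(linv (L (2 * k).+2) (x t) (velocity x t)).
  have eb : beta k.+1 = 2 * (k.+1)%:R * (t * t ^+ (2 * k)) *
             linv (L (2 * k).+2) (x t) (velocity x t).
    rewrite /beta (_ : (2 * k.+1 = (2 * k).+2)%N); last by rewrite mulnS add2n.
    by rewrite /= -e1 -natrM mulnS add2n.
  rewrite eb natrM e1.
  rewrite [beta k]/beta; set P := t ^+ (2 * k); set P1 := t ^+ (2 * k).-1; field.
  rewrite E0n andbT.
  by move: c0; rewrite (mulrS 1 (2 * k)) natrM.
have ekl : k = l by apply/eqP; rewrite eqn_leq hk hkl.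
subst k.
rewrite (@cub_CKT _ _ _ _ _ _ (x t) (velocity x t) KT2 Dq) big1 ?mul0r ?mulr0 //.
rewrite [beta l]/beta; set P := t ^+ (2 * l); set P1 := t ^+ (2 * l).-1; field.
by move: c0; rewrite (mulrS 1 (2 * l)) natrM.
by move=> i _; rewrite mul0r.
Qed.

Lemma I1E (l : nat) (L : nat -> 'I_n -> 'rV[R]_n -> R) C0 G (s : R) q w :
  I1 g l L C0 G s q w =
  \sum_(1 <= k < l.+1) (- (s ^+ (2 * k) / (2 * k)%:R) * quadv (symD g (L (2 * k).-1)) q w
                      + s ^+ (2 * k).-1 * linv (L (2 * k).-1) q w)
  + quadv C0 q w + G q.
Proof.
rewrite /I1; congr (_ + _).
rewrite big_split /= addrAC; congr (_ + _).
rewrite /quadv.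
under eq_bigr => a _ do under eq_bigr => b _ do rewrite mulrDl mulrDl.
under eq_bigr => a _ do rewrite big_split.
rewrite big_split /=; congr (_ + _).
under [RHS]eq_bigr => k _ do rewrite big_distrr.
under [RHS]eq_bigr => k _ do under eq_bigr => a _ do rewrite big_distrr.
rewrite [RHS]exchange_big; apply: eq_bigr => a _ /=.
rewrite [RHS]exchange_big; apply: eq_bigr => b _ /=.
rewrite -sumrN big_distrl big_distrl; apply: eq_bigr => k _ /=; ring.
Qed.

Lemma int1 (l : nat) (L : nat -> 'I_n -> 'rV[R]_n -> R)
          (C0 : 'I_n -> 'I_n -> 'rV[R]_n -> R) (X0 : 'I_n -> 'rV[R]_n -> R)
          (G : 'rV[R]_n -> R) :
     (forall k a, (1 <= k <= l)%N -> smoothOn D (L (2 * k).-1 a)) ->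
     (forall a b, smoothOn D (C0 a b)) ->
     smoothOn D G ->
     ((1 <= l)%N -> KT D g (symD g (L (2 * l).-1))) ->
     CKT D g C0 X0 ->
     (forall k, (1 <= k < l)%N ->
        CKT D g (symD g (L (2 * k).-1))
            (fun a q => (k * (2 * k).+1)%:R / E0 * L (2 * k).+1 a q)) ->
     (forall a q, D q ->
        partial G a q = - (2 * E0) * X0 a q - (if (0 < l)%N then L 1%N a q else 0)) ->
     first_integral D g E0 (I1 g l L C0 G).
Proof.
move=> sL sC sG KT2 cC ckt dG x t0 t1 Hg t Ht.
have [Dq dx dv geo cons] := Hg t Ht.
have nS k : (1 <= k <= l)%N -> forall a b, ndiff (symD g (L (2 * k).-1) a b) (x t).
  by move=> hk a b; exact: ndiff_symD mg Dq (fun a => sL k a hk).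
have nL k : (1 <= k <= l)%N -> forall a, ndiff (L (2 * k).-1 a) (x t).
  by move=> hk a; exact: smooth_ndiff (sL k a hk) Dq.
have nC : forall a b, ndiff (C0 a b) (x t) by move=> a b; exact: smooth_ndiff (sC a b) Dq.
have nG : ndiff G (x t) by exact: smooth_ndiff sG Dq.
rewrite (_ : (fun s => I1 g l L C0 G s (x s) (velocity x s)) = (fun s =>
  \sum_(1 <= k < l.+1) (- (s ^+ (2 * k) / (2 * k)%:R) * quadv (symD g (L (2 * k).-1)) (x s) (velocity x s)
                      + s ^+ (2 * k).-1 * linv (L (2 * k).-1) (x s) (velocity x s))
  + quadv C0 (x s) (velocity x s) + G (x s))); last first.
  by apply/funext => s; rewrite I1E.
apply: fi_of_isd.
  apply: isdD; last exact: (geo_dscal dx nG).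
  apply: isdD; last exact: (geo_dquad dx dv geo nC).
  apply: isd_sum => k; rewrite mem_index_iota ltnS => hk.
  exact: (isdD (isdM (isdN (isdM (isd_pow t (2 * k)) (isdC t ((2 * k)%:R)^-1)))
                     (geo_dquad dx dv geo (nS k hk)))
               (isdM (isd_pow t (2 * k).-1) (geo_dlin dx dv geo (nL k hk)))).
set gam := fun k => ((2 * k).-1)%:R * t ^+ (2 * k).-2 * linv (L (2 * k).-1) (x t) (velocity x t).
rewrite (@eq_big_nat _ _ _ 1 l.+1 _ (fun k => (if (k.+1 < l.+1)%N then - gam k.+1 else 0) + gam k)); last first.
  move=> k /andP [k1 hk]; rewrite ltnS in hk.
  have hk' : (1 <= k <= l)%N by rewrite k1 hk.
  rewrite /= -quad_symD ltnS.
  have k0 : (k%:R : R) != 0 by rewrite pnatr_eq0 -lt0n.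
  case: ltnP => hkl.
    have hk2 : (1 <= k < l)%N by rewrite k1 hkl.
    rewrite (@cub_CKT _ _ _ _ _ _ (x t) (velocity x t) (ckt k hk2) Dq) cons /=.
    rewrite sumZl -/(linv (L (2 * k).+1) (x t) (velocity x t)).
    have eg : gam k.+1 = ((2 * k).+1)%:R * t ^+ (2 * k) *
             linv (L (2 * k).+1) (x t) (velocity x t).
      by rewrite /gam (_ : (2 * k.+1 = (2 * k).+2)%N) //= mulnS add2n.
    rewrite eg [gam k]/gam natrM; set P := t ^+ (2 * k); set P1 := t ^+ (2 * k).-1;
      set P2 := t ^+ (2 * k).-2; field.
    by rewrite k0 E0n.
  have ekl : k = l by apply/eqP; rewrite eqn_leq hk hkl.
  subst k.
  rewrite (@cub_CKT _ _ _ _ _ _ (x t) (velocity x t) (KT2 k1) Dq) big1 ?mul0r ?mulr0; last first.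
    by move=> i _; rewrite mul0r.
  rewrite [gam l]/gam; set P := t ^+ (2 * l); set P1 := t ^+ (2 * l).-1;
    set P2 := t ^+ (2 * l).-2; field.
  exact: k0.
have tel : \sum_(1 <= i < l.+1) ((if (i.+1 < l.+1)%N then - gam i.+1 else 0) + gam i)
    = if (0 < l)%N then linv (L 1%N) (x t) (velocity x t) else 0.
  rewrite big_add1 /=.
  transitivity (if (0 < l)%N then gam 1%N else 0); first exact: telescope (fun j => gam j.+1) l.
  by rewrite /gam (_ : (2 * 1 = 2)%N) //= expr0 mulr1 mul1r.
rewrite tel (@cub_CKT _ _ _ _ _ _ (x t) (velocity x t) cC Dq) cons.
rewrite -/(linv X0 (x t) (velocity x t)).
have -> : \sum_a partial G a (x t) * velocity x t 0 a = - (2 * E0) * linv X0 (x t) (velocity x t)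
     - (if (0 < l)%N then linv (L 1%N) (x t) (velocity x t) else 0).
  under eq_bigr => a _ do rewrite dG //.
  rewrite /linv; case: (0 < l)%N.
    rewrite big_distrr -sumrB; apply: eq_bigr => a _ /=; ring.
  rewrite subr0 big_distrr; apply: eq_bigr => a _ /=; ring.
case: (0 < l)%N; ring.
Qed.
Lemma int3 (lam : R) (L : 'I_n -> 'rV[R]_n -> R) :
  (forall a, smoothOn D (L a)) ->
  CKT D g (symD g L) (fun a q => lam ^+ 2 / (2 * E0) * L a q) ->
  first_integral D g E0 (Iexp g lam L).
Proof.
move=> sL ckt x t0 t1 Hg t Ht.
have [Dq dx dv geo cons] := Hg t Ht.
have nS : forall a b, ndiff (symD g L a b) (x t) by move=> a b; exact: ndiff_symD mg Dq sL.
have nL : forall a, ndiff (L a) (x t) by move=> a; exact: smooth_ndiff (sL a) Dq.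
have H2 := geo_dquad dx dv geo nS.
have H3 := geo_dlin dx dv geo nL.
apply: (fi_of_isd (isdM (isd_exp t lam) (isdD (isdN H2) (isdM (isdC t lam) H3)))).
rewrite (@cub_CKT _ _ _ _ _ _ (x t) (velocity x t) ckt Dq) cons -quad_symD.
rewrite -/(linv (fun a q => lam ^+ 2 / (2 * E0) * L a q) (x t) (velocity x t)) linvZ.
rewrite -/(linv L (x t) (velocity x t)).
field; exact: E0n.
Qed.
End Ints.

Theorem proposition2 (R : realType) (n : nat) (D : set 'rV[R]_n)
    (g : 'I_n -> 'I_n -> 'rV[R]_n -> R) (E0 : R) :
  metricOn D g -> E0 != 0 ->
  (* Integral 1 *)
  (forall (l : nat) (L : nat -> 'I_n -> 'rV[R]_n -> R)
          (C0 : 'I_n -> 'I_n -> 'rV[R]_n -> R) (X0 : 'I_n -> 'rV[R]_n -> R)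
          (G : 'rV[R]_n -> R),
     (forall k a, (1 <= k <= l)%N -> smoothOn D (L (2 * k).-1 a)) ->
     (forall a b, smoothOn D (C0 a b)) ->
     smoothOn D G ->
     ((1 <= l)%N -> KT D g (symD g (L (2 * l).-1))) ->
     CKT D g C0 X0 ->
     (forall k, (1 <= k < l)%N ->
        CKT D g (symD g (L (2 * k).-1))
            (fun a q => (k * (2 * k).+1)%:R / E0 * L (2 * k).+1 a q)) ->
     (forall a q, D q ->
        partial G a q = - (2 * E0) * X0 a q - (if (0 < l)%N then L 1%N a q else 0)) ->
     first_integral D g E0 (I1 g l L C0 G)) /\
  (* Integral 2 *)
  (forall (l : nat) (L : nat -> 'I_n -> 'rV[R]_n -> R),
     (forall k a, (k <= l)%N -> smoothOn D (L (2 * k)%N a)) ->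
     KT D g (symD g (L (2 * l)%N)) ->
     (forall k, (k < l)%N ->
        CKT D g (symD g (L (2 * k)%N))
            (fun a q => (k.+1 * (2 * k).+1)%:R / E0 * L (2 * k).+2 a q)) ->
     first_integral D g E0 (I2 g l L)) /\
  (* Integral 3 *)
  (forall (lam : R) (L : 'I_n -> 'rV[R]_n -> R),
     lam != 0 ->
     (forall a, smoothOn D (L a)) ->
     CKT D g (symD g L) (fun a q => lam ^+ 2 / (2 * E0) * L a q) ->
     first_integral D g E0 (Iexp g lam L)).
Proof.
move=> mg E0n; split; last split.
- by move=> l L C0 X0 G; apply: int1.
- by move=> l L; apply: int2.
- by move=> lam L _; apply: int3.
Qed.
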